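(* Let $n \geq 2$ be an integer and let $t$ be an integer with $3 \leq t \leq n+1$. Let $\mathbf{v} \in \mathbb{Z}^t$ be a vector whose first entry $\mathbf{v}(1)$ is nonzero. Then the set $T(n,t,\mathbf{v})$ is finite.
   Context: A nonzero polynomial in $\mathbb{R}[x]$ is real-rooted if all its complex roots are real. For $\mathbf{v}\in\mathbb{Z}^t$ with entries $\mathbf{v}(1),\dots,\mathbf{v}(t)$, $T(n,t,\mathbf{v})$ denotes the set of all real-rooted polynomials $p(x) = \sum_{i=0}^n a_i x^{n-i} \in \mathbb{Z}[x]$ of degree $n$ such that $a_{i-1} = \mathbf{v}(i)$ for all $i \in \{1,\dots,t\}$. *)

(* Defs.v *)
From mathcomp Require Import all_boot all_order all_algebra all_field.
Set Implicit Arguments. Unset Strict Implicit. Unset Printing Implicit Defensive.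
Import Order.TTheory GRing.Theory Num.Theory.
Local Open Scope ring_scope.

Definition real_rooted (p : {poly int}) : Prop :=
  p != 0 /\ forall z : algC, root (map_poly intr p) z -> z \is Num.real.

(* T(n,t,v): real-rooted p = sum_{i=0}^n a_i x^(n-i) in Z[x] of degree n with
   a_{i-1} = v(i) for i = 1..t.  Here v : 'I_t -> int, with v k standing for
   v(k+1), and a_k = p`_(n-k). *)
Definition T_set (n t : nat) (v : 'I_t -> int) (p : {poly int}) : Prop :=
  real_rooted p /\ size p = n.+1 /\
  forall k : 'I_t, p`_(n - k) = v k.

(* Main.v *)
From mathcomp Require Import all_boot all_order all_algebra all_field.
From mathcomp Require Import ring lra zify.
Require Import Defs.
Import Order.TTheory GRing.Theory Num.Theory.
Local Open Scope ring_scope.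

Lemma coefXsubCM (R : comNzRingType) (r : R) (q : {poly R}) i :
  (('X - r%:P) * q)`_i = (if i == 0%N then 0 else q`_i.-1) - r * q`_i.
Proof. by rewrite mulrBl coefB coefXM coefCM. Qed.

Lemma prod_coef_bound (R : numDomainType) (rs : seq R) (M : R) :
  0 <= M -> (forall r, r \in rs -> `|r| <= M) ->
  forall i, `|(\prod_(r <- rs) ('X - r%:P))`_i| <= (1 + M) ^+ size rs.
Proof.
move=> M0; elim: rs => [|r rs IH] hr i.
  by rewrite big_nil coef1 expr0; case: (i == 0%N); rewrite ?normr1 ?normr0.
have IH' := IH (fun x hx => hr x (mem_behead (s:=r :: rs) hx)).
have hrM : `|r| <= M by apply: hr; rewrite inE eqxx.
have B0 : 0 <= (1 + M) ^+ size rs by apply: exprn_ge0; rewrite addr_ge0.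
rewrite big_cons coefXsubCM /= exprS.
apply: (le_trans (ler_normB _ _)).
rewrite mulrDl mul1r lerD //.
  by case: (i == 0%N); rewrite ?normr0.
by rewrite normrM ler_pM.
Qed.

Lemma prod_top (R : comNzRingType) (rs : seq R) :
  let q := \prod_(r <- rs) ('X - r%:P) in
  [/\ q`_(size rs) = 1,
      (if (0 < size rs)%N then q`_(size rs).-1 else 0) = - \sum_(r <- rs) r &
      (if (1 < size rs)%N then q`_(size rs).-2 else 0) *+ 2
         = (\sum_(r <- rs) r) ^+ 2 - \sum_(r <- rs) r ^+ 2].
Proof.
elim: rs => [|r rs [IH1 IH2 IH3]] /=.
  by rewrite !big_nil coef1 oppr0 expr0n /= mul0rn addr0.
have q0 : (\prod_(r0 <- rs) ('X - r0%:P))`_(size rs).+1 = 0.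
  by rewrite nth_default // size_prod_XsubC.
rewrite !big_cons !coefXsubCM /= q0 mulr0 subr0 IH1; split => //.
  case: rs IH1 IH2 IH3 q0 => [|r1 rs] /= IH1 IH2 IH3 q0.
    by rewrite big_nil mulr1 sub0r addr0.
  by rewrite IH2 mulr1; ring.
case: rs IH1 IH2 IH3 q0 => [|r1 rs] /= IH1 IH2 IH3 q0.
  by rewrite !big_nil mul0rn !addr0 subrr.
rewrite IH2 /=.
move: IH3; case: (size rs) => [|m] /= IH3.
  rewrite mul0rn in IH3; move/eqP: IH3; rewrite eq_sym subr_eq0 => /eqP IH3; rewrite -IH3; ring.
rewrite mulrnDl IH3; ring.
Qed.
Fixpoint lists (n : nat) (L : seq int) : seq (seq int) :=
  match n with 0%N => [:: [::]] | n'.+1 => allpairs (fun x l => x :: l) L (lists n' L) end.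

Lemma mem_lists n L l : size l = n -> all (mem L) l -> l \in lists n L.
Proof.
elim: n l => [|n IH] [|x l] //=; move=> //.
move=> [hs] /andP [hx hl]; apply: allpairs_f => //; exact: IH.
Qed.

Lemma bounded_fin (n N : nat) : exists s : seq {poly int}, forall p : {poly int},
  (size p <= n)%N -> (forall i, `|p`_i| <= N%:Z) -> p \in s.
Proof.
pose L := [seq (i%:Z - N%:Z) | i <- iota 0 (N + N).+1].
exists [seq Poly l | l <- lists n L] => p hs hb.
pose l := [seq p`_i | i <- iota 0 n].
have -> : p = Poly l.
  apply/polyP => i; rewrite coef_Poly.
  case: (ltnP i n) => hi.
    by rewrite (nth_map 0%N) ?size_iota // nth_iota.
  rewrite [l`_i]nth_default ?size_map ?size_iota // nth_default //.
  exact: leq_trans hs hi.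
apply: map_f; apply: mem_lists; first by rewrite size_map size_iota.
apply/allP => x /mapP [i _ ->].
have := hb i; set y := p`_i => hy.
apply/mapP; exists (absz (y + N%:Z)).
  clearbody y; rewrite mem_iota /=; lia.
lia.
Qed.

Lemma sq_le_sum (R : numDomainType) (rs : seq R) r :
  (forall x, x \in rs -> x \is Num.real) -> r \in rs ->
  r ^+ 2 <= \sum_(x <- rs) x ^+ 2.
Proof.
have sq0 : forall x : R, x \is Num.real -> 0 <= x ^+ 2.
  by move=> x hx; rewrite -real_normK // exprn_ge0.
elim: rs => [|x rs IH] // hr; rewrite in_cons big_cons => /orP [/eqP ->|hin].
  rewrite lerDl big_seq; apply: sumr_ge0 => y hy; apply: sq0; apply: hr.
  by rewrite in_cons hy orbT.
rewrite (le_trans (IH _ hin)) // ?lerDr ?sq0 // ?hr ?in_cons ?eqxx //.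
by move=> y hy; apply: hr; rewrite in_cons hy orbT.
Qed.

Lemma le_1sq (R : numDomainType) (x : R) : 0 <= x -> x <= 1 + x ^+ 2.
Proof.
move=> x0; have /orP [hx|hx] := real_leVge (ger0_real x0) (@real1 R).
  by apply: (le_trans hx); rewrite lerDl exprn_ge0.
have h : x <= x ^+ 2 by rewrite expr2 ler_peMl.
by apply: (le_trans h); rewrite lerDr ler01.
Qed.

Theorem proposition2p9 (n t : nat) (v : 'I_t -> int)
  (hn : (2 <= n)%N) (ht3 : (3 <= t)%N) (htn : (t <= n.+1)%N)
  (hv1 : forall k : 'I_t, nat_of_ord k = 0%N -> v k != 0) :
  exists s : seq {poly int}, forall p : {poly int}, @T_set n t v p -> p \in s.
Proof.
have h0 : (0 < t)%N by apply: leq_trans ht3.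
have h1 : (1 < t)%N by apply: leq_trans ht3.
have h2 : (2 < t)%N by [].
pose k0 := Ordinal h0; pose k1 := Ordinal h1; pose k2 := Ordinal h2.
pose c : algC := (v k0)%:~R.
have c0 : c != 0 by rewrite intr_eq0 hv1.
pose S : algC := ((v k1)%:~R / c) ^+ 2 - ((v k2)%:~R / c) *+ 2.
pose B : algC := `|c| * (1 + (1 + S)) ^+ n.
have [s hs] := bounded_fin n.+1 (Num.bound B).
exists s => p [[pnz hroot] [hsize hcoef]].
apply: hs; first by rewrite hsize.
pose P := map_poly (intr : int -> algC) p.
have sP : size P = n.+1 by rewrite size_map_inj_poly ?hsize //; exact: intr_inj.
have [rs hP] := closed_field_poly_normal P.
have lP : lead_coef P = c.
  rewrite lead_coef_map_inj //; last exact: intr_inj.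
  by rewrite lead_coefE hsize /= /c -(hcoef k0) subn0.
rewrite lP in hP.
set q := \prod_(z <- rs) ('X - z%:P) in hP.
have srs : size rs = n.
  by move: sP; rewrite hP size_scale // size_prod_XsubC => -[].
have cP : forall i, P`_i = c * q`_i by move=> i; rewrite hP coefZ.
have cp : forall i, P`_i = (p`_i)%:~R by move=> i; rewrite coef_map.
have [_ e1 e2] := @prod_top _ rs; rewrite -/q srs in e1 e2.
have n0 : (0 < n)%N by apply: leq_trans hn.
rewrite n0 hn in e1 e2.
have q1 : q`_n.-1 = (v k1)%:~R / c.
  by rewrite -(hcoef k1) -cp cP /= subn1 mulrAC mulfV // mul1r.
have q2 : q`_n.-2 = (v k2)%:~R / c.
  by rewrite -(hcoef k2) -cp cP /= subn2 mulrAC mulfV // mul1r.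
have real_rs : forall x, x \in rs -> x \is Num.real.
  move=> x hx; apply: hroot; rewrite -/P hP rootZ //.
  by rewrite root_prod_XsubC.
have sig2 : \sum_(r <- rs) r ^+ 2 = S.
  rewrite /S -q1 -q2 e2 e1 sqrrN; apply/eqP; rewrite eq_sym.
  by rewrite opprB addrC subrK.
have S0 : 0 <= S.
  rewrite -sig2 big_seq; apply: sumr_ge0 => x hx.
  by rewrite -real_normK ?real_rs // exprn_ge0.
have bnd : forall r, r \in rs -> `|r| <= 1 + S.
  move=> r hr; have := @le_1sq _ _ (normr_ge0 r) => h; apply: (le_trans h).
  by rewrite lerD2l real_normK ?real_rs // -sig2 sq_le_sum.
have M0 : 0 <= 1 + S by rewrite addr_ge0.
move=> i.
have hq := @prod_coef_bound _ rs (1 + S) M0 bnd i; rewrite -/q srs in hq.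
have : `|P`_i| < (Num.bound B)%:R.
  apply: le_lt_trans (archi_boundP _); last by rewrite mulr_ge0 // exprn_ge0 // addr_ge0.
  by rewrite cP normrM ler_wpM2l.
rewrite cp -intr_norm => h.
have : (`|p`_i|%:~R : algC) < (Posz (Num.bound B))%:~R by exact: h.
by rewrite ltr_int => /ltW.
Qed.
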